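(* Let $(G,E)$ be an undirected weighted graph with nodes $n_1,\dots,n_N$, symmetric nonnegative weights $w_{ij}$, strengths $k_i=\sum_s w_{is}$, $2m=\sum_i k_i>0$, let $\gamma\in\mathbb R$ and $\hat n\ge1$. Let $X=\{f\mid f:G\to\mathbb R^{\hat n}\}$, identified with $\mathbb R^{N\times\hat n}$ and given the Euclidean ($\ell_2$) metric. Then, as $\epsilon\to0^+$, the functionals $H_\epsilon$ $\Gamma$-converge to $H$ on $X$, where $$H_\epsilon(f)=\sum_{l=1}^{\hat n}\langle f^{(l)},\mathbf Lf^{(l)}\rangle+\frac{1}{\epsilon^2}\sum_{i=1}^N W_{\mathrm{multi}}(f(n_i))-\gamma\|f-\mathrm{mean}(f)\|_{\ell_2}^2,$$ $$H(f)=\begin{cases}|f|_{TV}-\gamma\|f-\mathrm{mean}(f)\|_{\ell_2}^2,& f\in X^p,\\ +\infty,&\text{otherwise.}\end{cases}$$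
   Context: $\mathbf L=\mathbf D-\mathbf W$ is the graph Laplacian, where $\mathbf W=[w_{ij}]$ and $\mathbf D=\mathrm{diag}(k_1,\dots,k_N)$; for $z:G\to\mathbb R$, $\langle z,\mathbf Lz\rangle=\frac12\sum_{i,j}w_{ij}(z_i-z_j)^2$. For $f\in X$, $f=(f^{(1)},\dots,f^{(\hat n)})$ with $f^{(l)}:G\to\mathbb R$. $V^{\hat n}=\{\vec e_1,\dots,\vec e_{\hat n}\}$ is the standard basis of $\mathbb R^{\hat n}$ and $X^p=\{f\mid f:G\to V^{\hat n}\}$. The multi-well potential is $W_{\mathrm{multi}}(x)=\prod_{l=1}^{\hat n}\|x-\vec e_l\|_{\ell_1}^2$ for $x\in\mathbb R^{\hat n}$. For $h:G\to\mathbb R$: $|h|_{TV}=\frac12\sum_{i,j}w_{ij}|h_i-h_j|$, $\|h\|_{\ell_2}^2=\sum_i k_ih_i^2$, $\mathrm{mean}(h)=\frac1{2m}\sum_ik_ih_i$; for vector-valued $f$ these are summed over components ($|f|_{TV}=\sum_l|f^{(l)}|_{TV}$, $\|f\|^2_{\ell_2}=\sum_l\|f^{(l)}\|^2_{\ell_2}$) and $\mathrm{mean}(f)$ is taken componentwise. $\Gamma$-convergence: functionals $F_\epsilon:X\to\mathbb R\cup\{\pm\infty\}$ $\Gamma$-converge to $F$ as $\epsilon\to0^+$ if for every sequence $\epsilon_n\to0^+$ and every $f\in X$: (i) for every sequence $f_n\to f$, $F(f)\le\liminf_n F_{\epsilon_n}(f_n)$; (ii) there exists a sequence $f_n\to f$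 with $F(f)\ge\limsup_nF_{\epsilon_n}(f_n)$. *)

(* Defs.v *)
From HB Require Import structures.
From mathcomp Require Import all_boot all_order all_algebra.
From mathcomp Require Import all_classical all_reals all_analysis.
Set Implicit Arguments. Unset Strict Implicit. Unset Printing Implicit Defensive.
Import Order.TTheory GRing.Theory Num.Theory.
Local Open Scope ring_scope.
Local Open Scope classical_set_scope.
Import numFieldNormedType.Exports.

Section Graph.
Variables (R : realType) (N nh : nat) (w : 'I_N -> 'I_N -> R).

(* X = functions G -> R^nh, f i l = f^(l)(n_i) *)
Definition fn_space := 'I_N -> 'I_nh -> R.

Definition strength (i : 'I_N) : R := \sum_(s < N) w i s.
Definition two_m : R := \sum_(i < N) strength i.

Definition laplacian : 'M[R]_N :=
  \matrix_(i, j) ((i == j)%:R * strength i - w i j).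

Definition lap_form (z : 'I_N -> R) : R :=
  \sum_(i < N) z i * \sum_(j < N) laplacian i j * z j.

Definition std_basis (l : 'I_nh) : 'I_nh -> R := fun j => (j == l)%:R.

Definition W_multi (x : 'I_nh -> R) : R :=
  \prod_(l < nh) (\sum_(j < nh) `|x j - std_basis l j|) ^+ 2.

Definition tv_scalar (h : 'I_N -> R) : R :=
  2^-1 * \sum_(i < N) \sum_(j < N) w i j * `|h i - h j|.
Definition tv (f : fn_space) : R := \sum_(l < nh) tv_scalar (fun i => f i l).

Definition mean_scalar (h : 'I_N -> R) : R :=
  two_m^-1 * \sum_(i < N) strength i * h i.
Definition l2sq_scalar (h : 'I_N -> R) : R :=
  \sum_(i < N) strength i * h i ^+ 2.
Definition var_term (f : fn_space) : R :=
  \sum_(l < nh) l2sq_scalar (fun i => f i l - mean_scalar (fun i' => f i' l)).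

Definition in_Xp (f : fn_space) : Prop :=
  forall i : 'I_N, exists l : 'I_nh, f i = std_basis l.

Definition H_eps (gamma eps : R) (f : fn_space) : R :=
  \sum_(l < nh) lap_form (fun i => f i l)
  + eps^-2 * \sum_(i < N) W_multi (f i)
  - gamma * var_term f.

Definition H_lim (gamma : R) (f : fn_space) : \bar R :=
  if `[< in_Xp f >] then ((tv f - gamma * var_term f)%:E)%E else (+oo)%E.

Definition eucl_dist (f g : fn_space) : R :=
  Num.sqrt (\sum_(i < N) \sum_(l < nh) (f i l - g i l) ^+ 2).

Definition conv_to (fs : nat -> fn_space) (f : fn_space) : Prop :=
  (fun n => eucl_dist (fs n) f) @ \oo --> (0 : R).

Definition Gamma_conv (F : R -> fn_space -> \bar R) (F0 : fn_space -> \bar R)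
  : Prop :=
  forall eps : nat -> R, (forall n, 0 < eps n) -> eps @ \oo --> (0 : R) ->
  forall f : fn_space,
    (forall fs : nat -> fn_space, conv_to fs f ->
       (F0 f <= limn_einf (fun n => F (eps n) (fs n)))%E) /\
    (exists fs : nat -> fn_space, conv_to fs f /\
       (limn_esup (fun n => F (eps n) (fs n)) <= F0 f)%E).

End Graph.

(* Main.v *)
Require Import Defs.
From HB Require Import structures.
From mathcomp Require Import all_boot all_order all_algebra.
From mathcomp Require Import all_classical all_reals all_analysis.
From mathcomp Require Import ring lra.
Import Order.TTheory GRing.Theory Num.Theory.
Import numFieldNormedType.Exports.
Local Open Scope ring_scope.
Local Open Scope classical_set_scope.


Lemma cvg_sumI (R : realType) k (u : 'I_k -> nat -> R) (a : 'I_k -> R) :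
  (forall i, u i @ \oo --> a i) ->
  (fun n => \sum_(i < k) u i n) @ \oo --> \sum_(i < k) a i.
Proof.
elim: k u a => [|k IH] u a H.
  under eq_fun do rewrite big_ord0. rewrite big_ord0. exact: cvg_cst.
under eq_fun do rewrite big_ord_recr. rewrite big_ord_recr /=.
apply: cvgD; last exact: H.
exact: (IH (fun i => u (widen_ord (leqnSn k) i))).
Qed.

Lemma cvg_prodI (R : realType) k (u : 'I_k -> nat -> R) (a : 'I_k -> R) :
  (forall i, u i @ \oo --> a i) ->
  (fun n => \prod_(i < k) u i n) @ \oo --> \prod_(i < k) a i.
Proof.
elim: k u a => [|k IH] u a H.
  under eq_fun do rewrite big_ord0. rewrite big_ord0. exact: cvg_cst.
under eq_fun do rewrite big_ord_recr. rewrite big_ord_recr /=.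
apply: cvgM; last exact: H.
exact: (IH (fun i => u (widen_ord (leqnSn k) i))).
Qed.

Lemma cvg_sq (R : realType) (u : nat -> R) (a : R) : u @ \oo --> a -> (fun n => u n ^+ 2) @ \oo --> a ^+ 2.
Proof. move=> H; rewrite expr2; under eq_fun do rewrite expr2. exact: cvgM. Qed.

Lemma einf_lb (R : realType) (a : nat -> R) (u : nat -> \bar R) (v : R) :
  (forall n, ((a n)%:E <= u n)%E) -> a @ \oo --> v -> (v%:E <= limn_einf u)%E.
Proof.
move=> au av.
have Ea : (fun n => (a n)%:E) @ \oo --> v%:E.
  by apply: cvg_EFin; [near=> n; done | exact: av].
have [<- _] := cvg_limn_einf_sup Ea.
rewrite !limn_einf_lim; apply: lee_lim; try exact: is_cvg_einfs.
near=> n; apply: le_ereal_inf_tmp => _ [k /= nk <-].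
apply: (le_trans _ (au k)); apply: ereal_inf_lbound; by exists k.
Unshelve. all: by end_near. Qed.


Lemma coord_cvg (R : realType) (N nh : nat) (fs : nat -> fn_space R N nh) f i l :
  conv_to fs f -> (fun n => fs n i l) @ \oo --> f i l.
Proof.
move=> H; apply/cvgrPdist_le => e e0.
move/cvgr_dist_le: H => /(_ e e0); apply: filterS => n.
rewrite sub0r normrN => hn; apply: le_trans hn.
rewrite /eucl_dist distrC -sqrtr_sqr ger0_norm ?sqrtr_ge0 //; apply: ler_wsqrtr.
apply: le_trans (_ : \sum_(l' < nh) (fs n i l' - f i l') ^+ 2 <= _).
  rewrite (bigD1 l) //=; apply: ler_wpDr => //; apply: sumr_ge0 => *; exact: sqr_ge0.
rewrite (bigD1 i) //=; apply: ler_wpDr => //; apply: sumr_ge0 => *; apply: sumr_ge0 => *; exact: sqr_ge0.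
Qed.

Lemma lap_cvg (R : realType) (N nh : nat) (w : 'I_N -> 'I_N -> R) (fs : nat -> fn_space R N nh) f :
  conv_to fs f ->
  (fun n => \sum_(l < nh) lap_form w (fun i => fs n i l)) @ \oo -->
  \sum_(l < nh) lap_form w (fun i => f i l).
Proof.
move=> H; apply: cvg_sumI => l; rewrite /lap_form; apply: cvg_sumI => i.
apply: cvgM; first exact: coord_cvg.
apply: cvg_sumI => j; apply: cvgM; [exact: cvg_cst| exact: coord_cvg].
Qed.

Lemma var_cvg (R : realType) (N nh : nat) (w : 'I_N -> 'I_N -> R) (fs : nat -> fn_space R N nh) f :
  conv_to fs f ->
  (fun n => var_term w (fs n)) @ \oo --> var_term w f.
Proof.
move=> H; apply: cvg_sumI => l; rewrite /l2sq_scalar; apply: cvg_sumI => i.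
apply: cvgM; first exact: cvg_cst.
apply: cvg_sq; apply: cvgB; first exact: coord_cvg.
rewrite /mean_scalar; apply: cvgM; first exact: cvg_cst.
apply: cvg_sumI => j; apply: cvgM; [exact: cvg_cst| exact: coord_cvg].
Qed.

Lemma W_cvg (R : realType) (N nh : nat) (fs : nat -> fn_space R N nh) f :
  conv_to fs f ->
  (fun n => \sum_(i < N) W_multi (fs n i)) @ \oo --> \sum_(i < N) W_multi (f i).
Proof.
move=> H; apply: cvg_sumI => i; rewrite /W_multi; apply: cvg_prodI => l.
apply: cvg_sq; apply: cvg_sumI => j; apply: cvg_norm; apply: cvgB.
  exact: coord_cvg.
exact: cvg_cst.
Qed.

Lemma lap_expand (R : realType) (N : nat) (w : 'I_N -> 'I_N -> R) (z : 'I_N -> R) :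
  lap_form w z = \sum_(i < N) \sum_(j < N) w i j * z i ^+ 2
               - \sum_(i < N) \sum_(j < N) w i j * (z i * z j).
Proof.
rewrite /lap_form -sumrB; apply: eq_bigr => i _.
have -> : \sum_(j < N) laplacian w i j * z j = strength w i * z i - \sum_(j < N) w i j * z j.
  under eq_bigr do rewrite mxE mulrBl.
  rewrite sumrB; congr (_ - _).
  rewrite (bigD1 i) //= eqxx mul1r big1 ?addr0 // => j /negbTE ji.
  by rewrite eq_sym ji mul0r mul0r.
rewrite mulrBr /strength mulr_suml !mulr_sumr; congr (_ - _); apply: eq_bigr => j _; ring.
Qed.

Lemma lap_tv (R : realType) (N : nat) (w : 'I_N -> 'I_N -> R) (z : 'I_N -> R) :
  (forall i j, w i j = w j i) -> (forall i, z i = 0 \/ z i = 1) ->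
  lap_form w z = tv_scalar w z.
Proof.
move=> hsym hz; rewrite lap_expand /tv_scalar.
have -> : \sum_(i < N) \sum_(j < N) w i j * `|z i - z j| =
   \sum_(i < N) \sum_(j < N) w i j * z i ^+ 2 + \sum_(i < N) \sum_(j < N) w i j * z j ^+ 2
   - \sum_(i < N) \sum_(j < N) 2 * (w i j * (z i * z j)).
  rewrite -big_split -sumrB; apply: eq_bigr => i _.
  rewrite -big_split -sumrB; apply: eq_bigr => j _.
  rewrite /=; case: (hz i) => ->; case: (hz j) => ->;
    rewrite ?subrr ?sub0r ?subr0 ?normrN ?normr0 ?normr1 /=; ring.
have -> : \sum_(i < N) \sum_(j < N) w i j * z j ^+ 2 = \sum_(i < N) \sum_(j < N) w i j * z i ^+ 2.
  rewrite exchange_big; apply: eq_bigr => i _; apply: eq_bigr => j _; by rewrite hsym.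
have -> : \sum_(i < N) \sum_(j < N) 2 * (w i j * (z i * z j)) = 2 * \sum_(i < N) \sum_(j < N) (w i j * (z i * z j)).
  rewrite mulr_sumr; apply: eq_bigr => i _; by rewrite mulr_sumr.
set a := \sum_(i < N) _; set b := \sum_(i < N) _.
by field.
Qed.

Lemma W_ge0 (R : realType) (nh : nat) (x : 'I_nh -> R) : 0 <= W_multi x.
Proof. apply: prodr_ge0 => l _; exact: sqr_ge0. Qed.

Lemma W_basis (R : realType) (nh : nat) (l : 'I_nh) : W_multi (std_basis R l) = 0.
Proof.
rewrite /W_multi (bigD1 l) //= [X in X ^+ 2]big1 ?expr2 ?mul0r // => j _.
by rewrite subrr normr0.
Qed.

Lemma W_zero (R : realType) (nh : nat) (x : 'I_nh -> R) :
  W_multi x = 0 -> exists l, x = std_basis R l.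
Proof.
move/eqP/prodf_eq0 => [l _]; rewrite sqrf_eq0 => /eqP s0.
exists l; apply: funext => j; apply/eqP; rewrite -subr_eq0 -normr_eq0; apply/eqP.
have H0 := psumr_eq0P (fun k _ => normr_ge0 _) s0.
by rewrite H0.
Qed.

Lemma W_pos (R : realType) (N nh : nat) (f : fn_space R N nh) :
  ~ in_Xp f -> 0 < \sum_(i < N) W_multi (f i).
Proof.
move=> nf; rewrite lt_neqAle sumr_ge0 ?andbT; last by move=> *; apply: W_ge0.
apply/eqP => /esym S0; apply: nf => i; apply: W_zero.
have H0 := psumr_eq0P (fun k _ => @W_ge0 _ _ (f k)) S0.
by rewrite H0.
Qed.

Lemma W_Xp (R : realType) (N nh : nat) (f : fn_space R N nh) :
  in_Xp f -> \sum_(i < N) W_multi (f i) = 0.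
Proof. by move=> hf; apply: big1 => i _; have [l ->] := hf i; exact: W_basis. Qed.

Lemma lap_Xp (R : realType) (N nh : nat) (w : 'I_N -> 'I_N -> R) (f : fn_space R N nh) :
  (forall i j, w i j = w j i) -> in_Xp f ->
  \sum_(l < nh) lap_form w (fun i => f i l) = tv w f.
Proof.
move=> hsym hf; apply: eq_bigr => l _; apply: lap_tv => // i.
have [l' ->] := hf i; rewrite /std_basis; case: (l == l'); [right|left]; done.
Qed.

Theorem mainTheorem2 (R : realType) (N nh : nat) (w : 'I_N -> 'I_N -> R)
  (gamma : R)
  (hsym : forall i j, w i j = w j i)
  (hnonneg : forall i j, 0 <= w i j)
  (h2m : 0 < two_m w)
  (hnh : (1 <= nh)%N) :
  @Gamma_conv R N nh (fun eps f => (@H_eps R N nh w gamma eps f)%:E)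
    (@H_lim R N nh w gamma).
Proof.
move=> eps heps eps0 f; split.
- move=> fs Hfs; rewrite /H_lim; case: (asboolP (in_Xp f)) => hf.
  + apply: (@einf_lb R (fun n => \sum_(l < nh) lap_form w (fun i => fs n i l) - gamma * var_term w (fs n))).
      move=> n; rewrite lee_fin /H_eps.
      have h1 : 0 <= eps n ^- 2 * \sum_(i < N) W_multi (fs n i).
        apply: mulr_ge0; first by rewrite invr_ge0 exprn_ge0 // ltW.
        by apply: sumr_ge0 => i _; exact: W_ge0.
      lra.
    rewrite -(@lap_Xp _ _ _ _ _ hsym hf); apply: cvgB; first exact: lap_cvg.
    apply: cvgM; [exact: cvg_cst | exact: var_cvg].
  + set P := fun n => \sum_(l < nh) lap_form w (fun i => fs n i l) - gamma * var_term w (fs n).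
    set p := \sum_(l < nh) lap_form w (fun i => f i l) - gamma * var_term w f.
    set S := fun n => \sum_(i < N) W_multi (fs n i).
    set c := \sum_(i < N) W_multi (f i).
    have cP : P @ \oo --> p.
      apply: cvgB; first exact: lap_cvg.
      apply: cvgM; [exact: cvg_cst | exact: var_cvg].
    have cS : S @ \oo --> c by exact: W_cvg.
    have c0 : 0 < c by exact: W_pos.
    have Einf : (fun n => (eps n ^+ 2)^-1) @ \oo --> +oo.
      apply/cvgrVy; first by near=> n; apply: exprn_gt0.
      have := @cvg_sq R _ _ eps0; by rewrite expr2 mul0r.
    suff Hy : (fun n => H_eps w gamma (eps n) (fs n)) @ \oo --> +oo.
      move/cvgeryP: Hy => Hy; by rewrite (cvg_limn_einf_sup Hy).1.
    apply/cvgryPge => A.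
    pose M := 2 * `|A - p + 1| / c.
    near=> n.
    have h1 : p - 1 <= P n by near: n; move/cvgr_ge: cP; apply; lra.
    have h2 : c / 2 <= S n by near: n; move/cvgr_ge: cS; apply; lra.
    have h3 : M <= (eps n ^+ 2)^-1 by near: n; apply: (cvgry_ge Einf).
    have h4 : M * (c / 2) <= (eps n ^+ 2)^-1 * S n.
      apply: ler_pM => //; last lra.
      rewrite /M; apply: mulr_ge0; [apply: mulr_ge0 => //|rewrite invr_ge0; lra].
    have h5 : M * (c / 2) = `|A - p + 1| by rewrite /M; field; lra.
    have h6 := ler_norm (A - p + 1).
    rewrite /H_eps; move: h1 h4; rewrite /P /S; lra.
- exists (fun _ => f); split.
    rewrite /conv_to /eucl_dist.
    rewrite (_ : (fun n => _) = fun _ => 0); first exact: cvg_cst.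
    apply: funext => n; rewrite big1 ?sqrtr0 // => i _; rewrite big1 // => l _.
    by rewrite subrr expr2 mul0r.
  rewrite /H_lim; case: asboolP => hf; last by rewrite leey.
  rewrite (_ : (fun n => _) = fun _ => (tv w f - gamma * var_term w f)%:E).
    by rewrite (cvg_limn_einf_sup (cvg_cst _)).2.
  apply: funext => n.
  by rewrite /H_eps (@W_Xp _ _ _ _ hf) mulr0 addr0 (@lap_Xp _ _ _ _ _ hsym hf).
Unshelve. all: by end_near.
Qed.
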